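(* Let $\mathcal{S}=\partial\Omega$ where $\Omega\subset\mathbb{R}^n$ is a non-empty bounded open set with $C^k$ boundary, $k\ge 2$. Let $q\in\mathbb{R}^n\setminus\mathcal{S}$ and suppose that $m=|\Gamma(q)|<\infty$, with $\Gamma(q)=\{p_1,\dots,p_m\}$. Then there exist $r>\mathrm{dist}(q,\mathcal{S})$ and pairwise-disjoint connected closed subsets $S_1,\dots,S_m\subset\mathcal{S}$ with $$\overline{B}(q,r)\cap\mathcal{S}\supset\bigsqcup_{i=1}^m S_i,\qquad p_i\in\mathrm{int}_{\mathcal{S}}(S_i)\ \text{ for each } i,$$ where $\mathrm{int}_{\mathcal{S}}$ denotes interior in the induced topology of $\mathcal{S}$. Moreover, setting $\alpha_i=\mathrm{dist}(\cdot,S_i)$, there exists a neighborhood $N$ of $q$ such that $\mathrm{dist}(x,\mathcal{S})=\min_{i=1,\dots,m}\alpha_i(x)$ for all $x\in N$.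
   Context: For $A\subset\mathbb{R}^n$, $\mathrm{dist}(q,A)=\inf_{y\in A}\|q-y\|$. For $q\in\mathbb{R}^n$, $\Gamma(q)=\{p\in\mathcal{S}: \|q-p\|=\mathrm{dist}(q,\mathcal{S})\}$ is the set of contact (closest) points of $q$ on $\mathcal{S}$. *)

(* Defs.v *)
From HB Require Import structures.
From mathcomp Require Import all_boot all_order all_algebra.
From mathcomp Require Import all_classical all_reals all_analysis.
Set Implicit Arguments. Unset Strict Implicit. Unset Printing Implicit Defensive.
Import Order.TTheory GRing.Theory Num.Theory.
Import numFieldNormedType.Exports.
Local Open Scope classical_set_scope.
Local Open Scope ring_scope.

(* Euclidean norm on R^n (the library's norm on 'rV is the max norm;
   it induces the same topology, but distances must be Euclidean). *)
Definition enorm (R : realType) (n : nat) (x : 'rV[R]_n) : R :=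
  Num.sqrt (\sum_(i < n) x ord0 i ^+ 2).

Definition dist (R : realType) (n : nat) (q : 'rV[R]_n) (A : set 'rV[R]_n) : R :=
  inf [set enorm (q - y) | y in A].

Definition contact (R : realType) (n : nat) (S : set 'rV[R]_n) (q : 'rV[R]_n)
  : set 'rV[R]_n :=
  [set p | S p /\ enorm (q - p) = dist q S].

Definition cball_e (R : realType) (n : nat) (q : 'rV[R]_n) (r : R) : set 'rV[R]_n :=
  [set x | enorm (x - q) <= r].

Definition boundary (T : topologicalType) (A : set T) : set T :=
  closure A `\` interior A.

Definition relint (T : topologicalType) (S A : set T) : set T :=
  [set p | A p /\ exists U, open U /\ U p /\ U `&` S `<=` A].

Fixpoint CkOn (R : realType) (n : nat) (k : nat) (U : set 'rV[R]_n)
    (f : 'rV[R]_n -> R) : Prop :=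
  match k with
  | 0 => forall x, U x -> {for x, continuous f}
  | k'.+1 => (forall x, U x -> differentiable f x) /\
             forall v : 'rV[R]_n, CkOn k' U ('D_v f)
  end.

Definition Ck_boundary (R : realType) (n : nat) (k : nat) (Om : set 'rV[R]_n) : Prop :=
  open Om /\
  forall p, boundary Om p ->
    exists U : set 'rV[R]_n, exists phi : 'rV[R]_n -> R,
      [/\ open U, U p, CkOn k U phi,
          (forall x, U x -> exists v : 'rV[R]_n, 'D_v phi x != 0) &
          Om `&` U = [set x | U x /\ phi x < 0]].

(* Main.v *)
Require Import Defs.
From HB Require Import structures.
From mathcomp Require Import all_boot all_order all_algebra.
From mathcomp Require Import all_classical all_reals all_analysis.
From mathcomp Require Import ring lra.
Import Order.TTheory GRing.Theory Num.Theory.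
Import numFieldNormedType.Exports.
Local Open Scope classical_set_scope.
Local Open Scope ring_scope.
Section EN.
Variables (R : realType) (n : nat).
Local Notation E := 'rV[R]_n.

Lemma enorm_ge0 (x : E) : 0 <= enorm x.
Proof. exact: sqrtr_ge0. Qed.

Lemma sumsq_ge0 (x : E) : 0 <= \sum_(i < n) x ord0 i ^+ 2.
Proof. by apply: sumr_ge0 => i _; exact: sqr_ge0. Qed.

Lemma enormN (x : E) : enorm (- x) = enorm x.
Proof. by rewrite /enorm; congr Num.sqrt; apply: eq_bigr => i _; rewrite mxE sqrrN. Qed.

Lemma enormB (x y : E) : enorm (x - y) = enorm (y - x).
Proof. by rewrite -enormN opprB. Qed.

Lemma enorm0 : enorm (0 : E) = 0.
Proof. by rewrite /enorm big1 ?sqrtr0 // => i _; rewrite mxE expr0n. Qed.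

Lemma cs_bound (a b : 'I_n -> R) :
  \sum_i a i * b i <= Num.sqrt (\sum_i a i ^+ 2) * Num.sqrt (\sum_i b i ^+ 2).
Proof.
set A := \sum_i a i ^+ 2; set B := \sum_i b i ^+ 2.
have A0 : 0 <= A by apply: sumr_ge0 => i _; exact: sqr_ge0.
have B0 : 0 <= B by apply: sumr_ge0 => i _; exact: sqr_ge0.
have key t : 0 < t -> 2 * t * (\sum_i a i * b i) <= t ^+ 2 * A + B.
  move=> t0; rewrite /A /B mulr_sumr mulr_sumr -big_split /=.
  apply: ler_sum => i _.
  have := sqr_ge0 (t * a i - b i); rewrite sqrrB; lra.
have [A0'|Apos] := eqVneq A 0.
  have ai0 i : a i = 0.
    apply/eqP; rewrite -sqrf_eq0; apply/eqP.
    by move/eqP: A0'; rewrite psumr_eq0 => [/allP/(_ i (mem_index_enum _))/implyP/(_ isT)/eqP|j _] //; exact: sqr_ge0.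
  by rewrite big1 ?mulr_ge0 ?sqrtr_ge0 // => i _; rewrite ai0 mul0r.
have [B0'|Bpos] := eqVneq B 0.
  have bi0 i : b i = 0.
    apply/eqP; rewrite -sqrf_eq0; apply/eqP.
    by move/eqP: B0'; rewrite psumr_eq0 => [/allP/(_ i (mem_index_enum _))/implyP/(_ isT)/eqP|j _] //; exact: sqr_ge0.
  by rewrite big1 ?mulr_ge0 ?sqrtr_ge0 // => i _; rewrite bi0 mulr0.
have Ap : 0 < A by rewrite lt_def Apos A0.
have Bp : 0 < B by rewrite lt_def Bpos B0.
have sA : 0 < Num.sqrt A by rewrite sqrtr_gt0.
have sB : 0 < Num.sqrt B by rewrite sqrtr_gt0.
set t := Num.sqrt B / Num.sqrt A.
have h := key t (divr_gt0 sB sA).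
have e1 : t ^+ 2 * A = B.
  by rewrite /t expr_div_n !sqr_sqrtr ?ltW //; field.
rewrite e1 in h.
set S := \sum_i a i * b i in h *.
have e2 : B = t * (Num.sqrt A * Num.sqrt B).
  by rewrite /t -[X in X = _](sqr_sqrtr (ltW Bp)); field; rewrite gt_eqF.
have tp : 0 < t by rewrite divr_gt0.
have : t * (2 * S) <= t * (2 * (Num.sqrt A * Num.sqrt B)).
  rewrite mulrCA (mulrCA t 2) mulrA; apply: (le_trans h); lra.
rewrite ler_pM2l //; lra.
Qed.

Lemma enormD (x y : E) : enorm (x + y) <= enorm x + enorm y.
Proof.
rewrite /enorm -ler_sqr ?nnegrE ?addr_ge0 ?sqrtr_ge0 //.
rewrite sqrrD !sqr_sqrtr ?sumsq_ge0 //.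

have := cs_bound (fun i => x ord0 i) (fun i => y ord0 i).
rewrite (_ : \sum_(i < n) (x + y) ord0 i ^+ 2 = \sum_i x ord0 i ^+ 2 + \sum_i y ord0 i ^+ 2 + 2 * \sum_i x ord0 i * y ord0 i).
  move=> h; lra.
rewrite mulr_sumr -!big_split /=; apply: eq_bigr => i _; rewrite mxE; ring.
Qed.

Lemma enorm_tri (x y z : E) : enorm (x - z) <= enorm (x - y) + enorm (y - z).
Proof. by rewrite (_ : x - z = (x - y) + (y - z)) ?enormD // addrA subrK. Qed.

Lemma sum_cont_seq (s : seq 'I_n) (f : 'I_n -> E -> R) (x : E) :
  (forall i, {for x, continuous (f i)}) ->
  {for x, continuous (fun y => \sum_(i <- s) f i y)}.
Proof.
move=> fc; elim: s => [|j s IH].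
  rewrite (_ : (fun y => _) = fun=> 0); first exact: cst_continuous.
  by apply: funext => y; rewrite big_nil.
rewrite (_ : (fun y => _) = (fun y => f j y + \sum_(i <- s) f i y)).
  exact: continuousD.
by apply: funext => y; rewrite big_cons.
Qed.

Lemma sum_cont (f : 'I_n -> E -> R) (x : E) :
  (forall i, {for x, continuous (f i)}) ->
  {for x, continuous (fun y => \sum_i f i y)}.
Proof. exact: sum_cont_seq. Qed.


Lemma enorm_continuous : continuous (@enorm R n).
Proof.
move=> x; apply: continuous_comp; last exact: sqrt_continuous.
apply: sum_cont => i.
apply: continuousM; exact: coord_continuous.
Qed.


End EN.
Section DI.
Variables (R : realType) (n : nat).
Local Notation E := 'rV[R]_n.

Lemma dist_lbnd (x : E) (A : set E) : has_lbound [set enorm (x - y) | y in A].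
Proof. by exists 0 => _ [y _ <-]; exact: enorm_ge0. Qed.

Lemma dist_le (x y : E) (A : set E) : A y -> dist x A <= enorm (x - y).
Proof. by move=> Ay; apply: (ge_inf (dist_lbnd x A)); exists y. Qed.

Lemma dist_ge0 (x : E) (A : set E) : 0 <= dist x A.
Proof.
have [[y Ay]|A0] := pselect (A !=set0).
  by apply: lb_le_inf; [exists (enorm (x - y)), y|move=> _ [z Az <-]; exact: enorm_ge0].
rewrite /dist (_ : [set enorm (x - y) | y in A] = set0) ?inf0 //.
by apply/seteqP; split => // w [z Az _]; case: A0; exists z.
Qed.

Lemma dist_eq (x y : E) (A : set E) : A y ->
  (forall z, A z -> enorm (x - y) <= enorm (x - z)) -> dist x A = enorm (x - y).
Proof.
move=> Ay H; apply/le_anti; apply/andP; split; first exact: dist_le.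
by apply: lb_le_inf; [exists (enorm (x - y)), y|move=> _ [z Az <-]; exact: H].
Qed.

Lemma dist_mono (x : E) (A B : set E) : B `<=` A -> B !=set0 -> dist x A <= dist x B.
Proof.
move=> BA [y By]; apply: lb_le_inf; first by exists (enorm (x - y)), y.
by move=> _ [z Bz <-]; apply: dist_le; exact: BA.
Qed.

Lemma enormB_continuous (x : E) : continuous (fun z : E => enorm (x - z)).
Proof.
move=> z; apply: continuous_comp; last exact: enorm_continuous.
by apply: continuousB; [exact: cst_continuous|].
Qed.

Lemma enormBr_continuous (x : E) : continuous (fun z : E => enorm (z - x)).
Proof.
move=> z; apply: continuous_comp; last exact: enorm_continuous.
by apply: continuousB; [|exact: cst_continuous].
Qed.

Lemma dist_min (x : E) (A : set E) : compact A -> A !=set0 ->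
  exists y, A y /\ forall z, A z -> enorm (x - y) <= enorm (x - z).
Proof.
move=> cA A0.
have [y yA H] := @EVT_min_rV R n (fun z => enorm (x - z)) A A0 cA
  (continuous_subspaceT (enormB_continuous x)).
exists y; split; first by rewrite inE in yA.
by move=> z Az; apply: H; rewrite inE.
Qed.

End DI.
Section SB.
Variables (R : realType) (n : nat).
Local Notation E := 'rV[R]_n.

Lemma boundary_closed (A : set E) : closed (boundary A).
Proof.
rewrite /boundary setDE; apply: closedI; first exact: closed_closure.
exact/open_closedC/open_interior.
Qed.

Lemma closure_bounded (A : set E) : bounded_set A -> bounded_set (closure A).
Proof.
rewrite /bounded_set /= /bounded_near => H; apply: filterS H => M HM x clx.
have cl : closed (closed_ball_ (@Num.norm _ E) (0 : E) M) by exact: closed_closed_ball_.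
have : closure A `<=` closed_ball_ (@Num.norm _ E) (0 : E) M.
  rewrite [X in _ `<=` X]((closure_id _).1 cl); apply: closureS => y Ay.
  by rewrite /closed_ball_ /= sub0r normrN; exact: HM.
by move=> /(_ x clx); rewrite /closed_ball_ /= sub0r normrN.
Qed.

Lemma boundary_compact (A : set E) : bounded_set A -> compact (boundary A).
Proof.
move=> bA; apply: bounded_closed_compact; last exact: boundary_closed.
have := @closure_bounded A bA; rewrite /bounded_set /= /bounded_near => H.
by apply: filterS H => M HM x [clx _]; exact: HM.
Qed.

Lemma E_connected : connected [set: E].
Proof.
have -> : [set: E] = \bigcup_(y in [set: E]) ((fun t : R => t *: y) @` `[0, 1]).
  apply/seteqP; split => // y _; exists y => //; exists 1; last exact: scale1r.
  by rewrite /= in_itv /= lexx ler01.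
apply: bigcup_connected.
  exists 0 => y _; exists 0; last exact: scale0r.
  by rewrite /= in_itv /= lexx ler01.
move=> y _; apply: connected_continuous_connected; first exact: segment_connected.
exact/continuous_subspaceT/scalel_continuous.
Qed.

Lemma boundary_nonempty (A : set E) : (0 < n)%N -> A !=set0 -> open A ->
  bounded_set A -> boundary A !=set0.
Proof.
move=> n0 A0 oA bA; apply: contrapT => bd0.
have Acl : closure A `<=` A.
  move=> x clx; apply: contrapT => nAx; apply: bd0; exists x; split => //.
  by move/interior_subset.
have AT : A = [set: E].
  apply: E_connected => //; first by exists A => //; rewrite setTI.
  by exists (closure A); [exact: closed_closure|
    rewrite setTI; apply/seteqP; split; [exact: subset_closure|]].
have [M M0 HM] := ex_strict_bound_gt0 bA.
pose y : E := const_mx 1.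
have y0 : y != 0.
  apply/negP => /eqP/matrixP/(_ ord0 (Ordinal n0)); rewrite !mxE => /eqP.
  by rewrite oner_eq0.
have ny : 0 < `|y| by rewrite normr_gt0.
have := HM ((M / `|y|) *: y); rewrite AT => /(_ I).
rewrite /= normrZ ger0_norm ?divr_ge0 ?ltW // divfK ?gt_eqF //.
by rewrite ltxx.
Qed.

End SB.
Section NEAR.
Variables (R : realType) (n : nat).
Local Notation E := 'rV[R]_n.

Lemma pos_near (f : E -> R) (x : E) : {for x, continuous f} -> 0 < f x ->
  \forall z \near x, 0 < f z.
Proof.
move=> /cvgrPdist_lt/[apply]; apply: filterS => y /= hy.
by have := le_lt_trans (ler_norm (f x - f y)) hy; rewrite ltrBlDr ltrDl.
Qed.

Lemma neg_near (f : E -> R) (x : E) : {for x, continuous f} -> f x < 0 ->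
  \forall z \near x, f z < 0.
Proof.
move=> fc fx; have : \forall z \near x, 0 < - f z.
  by apply: pos_near; [exact: continuousN|rewrite oppr_gt0].
by apply: filterS => z; rewrite oppr_gt0.
Qed.

Lemma shift_cont (f : E -> R) (c x : E) : {for (x + c), continuous f} ->
  {for x, continuous (fun y : E => f (y + c))}.
Proof.
move=> fc.
have h : {for x, continuous (fun y : E => y + c)}.
  exact: (@continuousD R E E (fun y => y) (fun=> c) x (@cvg_id _ _) (@cst_continuous _ _ c x)).
exact: (continuous_comp h fc).
Qed.

Lemma ballE' (p z : E) (e : R) : ball p e z = (`|p - z| < e).
Proof. by rewrite -ball_normE. Qed.

End NEAR.
Section LD.
Variables (R : realType) (n : nat).
Local Notation E := 'rV[R]_n.

Lemma line_derive (f : E -> R) (x v : E) (t : R) :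
  differentiable f (x + t *: v) ->
  is_derive t 1 (fun s : R => f (x + s *: v)) ('D_v f (x + t *: v)).
Proof.
move=> df.
have eqq : (fun h : R => h^-1 *: (((fun s : R => f (x + s *: v)) \o shift t) (h *: 1)
              - f (x + t *: v))) =
           (fun h : R => h^-1 *: ((f \o shift (x + t *: v)) (h *: v) - f (x + t *: v))).
  apply: funext => h /=; congr (_ *: (f _ - _)).
  by rewrite [h%:A]mulr1 scalerDl addrCA.
have dv : derivable f (x + t *: v) v by exact: diff_derivable.
apply: DeriveDef.
  by rewrite /derivable eqq.
by rewrite /derive eqq.
Qed.

Lemma line_mono (f : E -> R) (x v : E) (a b : R) :
  (forall s, a <= s <= b -> differentiable f (x + s *: v) /\ 0 < 'D_v f (x + s *: v)) ->
  forall s1 s2, a <= s1 -> s1 < s2 -> s2 <= b -> f (x + s1 *: v) < f (x + s2 *: v).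
Proof.
move=> H s1 s2 as1 s12 s2b.
have in_ab s : s1 <= s <= s2 -> a <= s <= b.
  by move=> /andP[h1 h2]; apply/andP; split; [exact: le_trans h1|exact: le_trans h2 _].
have Hd s : s1 <= s <= s2 -> is_derive s 1 (fun s => f (x + s *: v)) ('D_v f (x + s *: v)).
  by move=> hs; apply: line_derive; exact: (H s (in_ab s hs)).1.
have cont : {within `[s1, s2], continuous (fun s => f (x + s *: v))}.
  apply: derivable_within_continuous => s sin.
  have hs : s1 <= s <= s2 by move: sin; rewrite in_itv.
  exact: (Hd s hs).(ex_derive).
have [c cin eq] := @MVT R (fun s => f (x + s *: v)) (fun s => 'D_v f (x + s *: v)) s1 s2 s12
  (fun s sin => Hd s (ltac:(move: sin; rewrite in_itv /= => /andP[h1 h2]; apply/andP; split; exact: ltW)))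
  cont.
have cin' : a <= c <= b.
  by apply: in_ab; move: cin; rewrite in_itv /= => /andP[h1 h2]; apply/andP; split; exact: ltW.
have := (H c cin').2 => hp.
by rewrite -subr_gt0 eq mulr_gt0 // subr_gt0.
Qed.
End LD.
Section CB.
Variables (R : realType) (n : nat).
Local Notation E := 'rV[R]_n.

Lemma cball_connected (p : E) (r : R) : connected (closed_ball_ (@Num.norm _ E) p r).
Proof.
set B := closed_ball_ _ p r.
have -> : B = \bigcup_(y in B) ((fun s : R => p + s *: (y - p)) @` `[0, 1]).
  apply/seteqP; split => [y By|z [y By [s sin <-]]].
    exists y => //; exists 1; first by rewrite /= in_itv /= lexx ler01.
    by rewrite scale1r addrC subrK.
  move: By sin; rewrite /B /closed_ball_ /= in_itv /= => hy /andP[s0 s1].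
  rewrite opprD addrA subrr sub0r normrN normrZ ger0_norm //.
  rewrite -normrN opprB in hy.
  by rewrite (le_trans _ hy) // ler_piMl.
apply: bigcup_connected.
  by exists p => y _; exists 0; [rewrite /= in_itv /= lexx ler01|rewrite scale0r addr0].
move=> y _; apply: connected_continuous_connected; first exact: segment_connected.
apply: continuous_subspaceT => s.
apply: (@continuousD _ _ _ (fun=> p) (fun s : R => s *: (y - p))); first exact: cst_continuous.
exact: scalel_continuous.
Qed.

Lemma cball_compact (p : E) (r : R) : compact (closed_ball_ (@Num.norm _ E) p r).
Proof.
apply: bounded_closed_compact; last exact: closed_closed_ball_.
rewrite /bounded_set /= /bounded_near; exists (`|p| + r); split; first exact: num_real.
move=> M hM y.
rewrite /closed_ball_ /= => hy; apply: ltW; apply: le_lt_trans hM.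
rewrite -[y](addrNK p) (le_trans (ler_normD _ _)) // addrC lerD2l.
by rewrite -normrN opprB.
Qed.

End CB.
Section LOC.
Variables (R : realType) (n : nat).
Local Notation E := 'rV[R]_n.

Lemma local_piece (k : nat) (Om : set E) : (2 <= k)%N -> Ck_boundary k Om ->
  forall p, boundary Om p -> forall W, nbhs p W ->
  exists K U, [/\ K `<=` boundary Om `&` W, connected K, closed K & K p] /\
     [/\ open U, U p & U `&` boundary Om `<=` K].
Proof.
move=> hk [oOm Hb] p bp W Wp.
have [U0 [phi [oU0 U0p Ck nz eqOm]]] := Hb p bp.
have [dphi dD] : (forall x, U0 x -> differentiable phi x) /\
   (forall v x, U0 x -> differentiable ('D_v phi) x).
  clear Hb; move: hk Ck; case: k => [|[|k']] // _ /= [d1 H]; split => // v x Ux.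
  by have [+ _] := H v; apply.
have phic x : U0 x -> {for x, continuous phi}.
  by move=> /dphi /differentiable_continuous.
have Dc v x : U0 x -> {for x, continuous ('D_v phi)}.
  by move=> /(dD v) /differentiable_continuous.
have OmU x : U0 x -> Om x <-> phi x < 0.
  move=> Ux; split => [Omx|px].
    by have : (Om `&` U0) x by []; rewrite eqOm => -[].
  by have : [set x | U0 x /\ phi x < 0] x by []; rewrite -eqOm => -[].
have phi0 z : U0 z -> boundary Om z -> phi z = 0.
  move=> Uz [clz niz]; case: (ltgtP (phi z) 0) => // h.
    by exfalso; apply: niz; apply: oOm; apply/OmU.
  exfalso.
  have Nz : nbhs z (U0 `&` [set y | 0 < phi y]).
    apply: filterI; first exact: (open_nbhs_nbhs (conj oU0 Uz)).
    have := phic z Uz; move/cvgrPdist_lt/(_ (phi z) h).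
    apply: filterS => y /= hy.
    by have := le_lt_trans (ler_norm (phi z - phi y)) hy; rewrite ltrBlDr ltrDl.
  have [w [Omw [Uw pw]]] := clz _ Nz.
  by have := lt_trans pw ((OmU w Uw).1 Omw); rewrite ltxx.
have [v vpos] : exists v, 0 < 'D_v phi p.
  have [v0 hv0] := nz p U0p.
  case: (ltgtP ('D_v0 phi p) 0) => h; last by rewrite h eqxx in hv0.
    exists (- v0); rewrite deriveE; last exact: dphi.
    have e : 'd phi p (- v0) = - 'd phi p v0 := raddfN _ _.
    rewrite e -deriveE; last exact: dphi.
    by rewrite oppr_gt0.
  by exists v0.
have N1 : nbhs p (U0 `&` W `&` [set z | 0 < 'D_v phi z]).
  apply: filterI; first apply: filterI => //.
    exact: (open_nbhs_nbhs (conj oU0 U0p)).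
  exact: pos_near (Dc v p U0p) vpos.
have [e0 e0pos He0] := (nbhs_ballP _ _).1 N1.
have inb z : `|p - z| < e0 -> [/\ U0 z, W z & 0 < 'D_v phi z].
  by move=> hz; have [[]] := He0 z (ltac:(by rewrite ballE')).
set nv := `|v|.
have nv0 : 0 <= nv by exact: normr_ge0.
set dl := e0 / (2 * (nv + 1)).
have dl0 : 0 < dl by rewrite divr_gt0 // mulr_gt0 // ltr_wpDl.
have dlnv : dl * nv <= e0 / 2.
  rewrite /dl mulrAC ler_pdivrMr ?mulr_gt0 ?ltr_wpDl //.
  have -> : e0 / 2 * (2 * (nv + 1)) = e0 * (nv + 1) by field.
  by rewrite ler_pM2l // lerDl.
have Line y t : `|p - y| < e0 / 2 -> -dl <= t <= dl -> `|p - (y + t *: v)| < e0.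
  move=> hy /andP[t1 t2].
  have ht : `|t| <= dl by rewrite ler_norml t1 t2.
  rewrite opprD addrA (le_lt_trans (ler_normB _ _)) // normrZ.
  have : `|t| * nv <= e0 / 2 by apply: le_trans dlnv; rewrite ler_wpM2r.
  move=> h; rewrite [X in _ < X](splitr e0); exact: ltr_leD.
have Mono y : `|p - y| < e0 / 2 -> forall s1 s2, -dl <= s1 -> s1 < s2 -> s2 <= dl ->
    phi (y + s1 *: v) < phi (y + s2 *: v).
  move=> hy; apply: line_mono => s hs.
  have [U W' D] := inb _ (Line y s hy hs).
  by split => //; exact: dphi.
have Line0 y t : `|p - y| < e0 / 2 -> -dl <= t <= dl -> U0 (y + t *: v).
  by move=> hy ht; have [] := inb _ (Line y t hy ht).
have dlr : -dl <= dl by rewrite (le_trans (y:=0)) ?oppr_le0 ?ltW.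
have p0 : phi p = 0 := phi0 p U0p bp.
have pp : `|p - p| < e0 / 2 by rewrite subrr normr0 divr_gt0.
have pm : phi (p + (- dl) *: v) < 0.
  have := Mono p pp (-dl) 0 (lexx _) (ltac:(by rewrite oppr_lt0)) (ltW dl0).
  by rewrite scale0r addr0 p0.
have pP : 0 < phi (p + dl *: v).
  have := Mono p pp 0 dl (ltac:(by rewrite oppr_le0 ltW)) dl0 (lexx _).
  by rewrite scale0r addr0 p0.
have [rho rho0 Hrho] : exists2 rho, 0 < rho & forall y, `|p - y| < rho ->
    [/\ `|p - y| < e0 / 2, phi (y + (- dl) *: v) < 0 & 0 < phi (y + dl *: v)].
  have N2 : \forall y \near p, [/\ `|p - y| < e0 / 2, phi (y + (- dl) *: v) < 0 & 0 < phi (y + dl *: v)].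
    near=> y; split.
    - near: y; apply/(nbhs_ballP _ _).2; exists (e0 / 2); first by rewrite /= divr_gt0.
      by move=> y; rewrite ballE'.
    - near: y; apply: (@neg_near R n (fun y => phi (y + (- dl) *: v))) => //.
      by apply: shift_cont; apply: phic; apply: Line0 => //; rewrite lexx dlr.
    - near: y; apply: (@pos_near R n (fun y => phi (y + dl *: v))) => //.
      by apply: shift_cont; apply: phic; apply: Line0 => //; rewrite lexx dlr.
  have [r r0 Hr] := (nbhs_ballP _ _).1 N2.
  by exists r => // y hy; apply: Hr; rewrite ballE'.
have Hr y : `|p - y| < rho -> `|p - y| < e0 / 2 by case/Hrho.
have ex y : exists t, `|p - y| < rho -> -dl <= t <= dl /\ phi (y + t *: v) = 0.
  case: (pselect (`|p - y| < rho)) => hy; last by exists 0.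
  have [h1 h2 h3] := Hrho y hy.
  have cont : {within `[-dl, dl], continuous (fun t => phi (y + t *: v))}.
    apply: derivable_within_continuous => t tin.
    have ht : -dl <= t <= dl by move: tin; rewrite in_itv.
    exact: (@line_derive R n phi y v t (dphi _ (Line0 y t h1 ht))).(ex_derive).
  have [c cin hc] := @IVT R (fun t => phi (y + t *: v)) (-dl) dl 0 dlr cont
    (ltac:(apply/andP; split; [by rewrite ge_min (ltW h2)|by rewrite le_max (ltW h3) orbT])).
  by exists c => _; split; [move: cin; rewrite in_itv|exact: hc].
have [tf Htf] := choice ex.
have Uniq y t1 t2 : `|p - y| < e0 / 2 -> -dl <= t1 <= dl -> -dl <= t2 <= dl ->
    phi (y + t1 *: v) = phi (y + t2 *: v) -> t1 = t2.
  move=> hy /andP[a1 b1] /andP[a2 b2] e.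
  case: (ltgtP t1 t2) => // h.
    by have := Mono y hy t1 t2 a1 h b2; rewrite e ltxx.
  by have := Mono y hy t2 t1 a2 h b1; rewrite e ltxx.
have lowr y a : `|p - y| < rho -> -dl <= a -> a <= dl -> phi (y + a *: v) < 0 -> a < tf y.
  move=> hy ha1 ha2 hn; rewrite ltNge; apply/negP => hle.
  have [/andP[t1 t2] t0] := Htf y hy.
  move: hle; rewrite le_eqVlt => /orP[/eqP e|hlt].
    by move: hn; rewrite -e t0 ltxx.
  by have := Mono y (Hr y hy) (tf y) a t1 hlt ha2; rewrite t0 => /(lt_trans hn); rewrite ltxx.
have uppr y b : `|p - y| < rho -> -dl <= b -> b <= dl -> 0 < phi (y + b *: v) -> tf y < b.
  move=> hy hb1 hb2 hn; rewrite ltNge; apply/negP => hle.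
  have [/andP[t1 t2] t0] := Htf y hy.
  move: hle; rewrite le_eqVlt => /orP[/eqP e|hlt].
    by move: hn; rewrite e t0 ltxx.
  by have := Mono y (Hr y hy) b (tf y) hb1 hlt t2; rewrite t0 => /(lt_trans hn); rewrite ltxx.
have Tint y : `|p - y| < rho -> -dl < tf y < dl.
  move=> hy; have [h1 h2 h3] := Hrho y hy.
  by rewrite (lowr y (-dl)) ?(uppr y dl) ?lexx.
have tfc y0 : `|p - y0| < rho -> {for y0, continuous tf}.
  move=> hy0; apply/(@cvgrPdist_lt _ _ E (nbhs y0) (nbhs_filter y0) tf (tf y0)).2 => e e_gt0.
  set t0 := tf y0.
  have [/andP[t01 t02] t0z] := Htf y0 hy0.
  have /andP[t0l t0u] := Tint y0 hy0.
  set a := Num.max (t0 - e) (-dl); set b := Num.min (t0 + e) dl.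
  have at0 : a < t0 by rewrite /a gt_max t0l andbT ltrBlDr ltrDl.
  have bt0 : t0 < b by rewrite /b lt_min t0u andbT ltrDl.
  have a1 : -dl <= a by rewrite /a le_max lexx orbT.
  have b2 : b <= dl by rewrite /b ge_min lexx orbT.
  have a2 : a <= dl by rewrite (le_trans (ltW at0)).
  have b1 : -dl <= b by rewrite (le_trans _ (ltW bt0)).
  have pa : phi (y0 + a *: v) < 0.
    by have := Mono y0 (Hr y0 hy0) a t0 a1 at0 t02; rewrite t0z.
  have pb : 0 < phi (y0 + b *: v).
    by have := Mono y0 (Hr y0 hy0) t0 b t01 bt0 b2; rewrite t0z.
  near=> y.
  have hy : `|p - y| < rho.
    near: y; have b0 : ball p rho y0 by rewrite ballE'.
    have := open_nbhs_nbhs (conj (ball_open p rho) b0).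
    by apply: filterS => y; rewrite ballE'.
  have la : a < tf y.
    apply: lowr => //; near: y.
    apply: (@neg_near R n (fun y => phi (y + a *: v))) => //.
    by apply: shift_cont; apply: phic; apply: Line0 (Hr y0 hy0) _; rewrite a1 a2.
  have ub : tf y < b.
    apply: uppr => //; near: y.
    apply: (@pos_near R n (fun y => phi (y + b *: v))) => //.
    by apply: shift_cont; apply: phic; apply: Line0 (Hr y0 hy0) _; rewrite b1 b2.
  rewrite ltr_distlC; apply/andP; split.
    by apply: le_lt_trans la; rewrite /a le_max lexx.
  by apply: lt_le_trans ub _; rewrite /b ge_min lexx.
pose F := fun y : E => y + tf y *: v.
have Fc y0 : `|p - y0| < rho -> {for y0, continuous F}.
  move=> hy0.
  exact: (@continuousD R E E (fun y => y) (fun y => tf y *: v) y0 (@cvg_id _ _)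
           (@continuousZr_tmp R E E tf v y0 (tfc y0 hy0))).
have rho2 : 0 < rho / 2 by rewrite divr_gt0.
have rho2l : rho / 2 < rho by rewrite ltr_pdivrMr // ltr_pMr // ltr1n.
pose B := closed_ball_ (@Num.norm _ E) p (rho / 2).
have Bin y : B y -> `|p - y| < rho by rewrite /B /closed_ball_ /= => h; exact: le_lt_trans h rho2l.
have Fcw : {within B, continuous F}.
  by apply: continuous_in_subspaceT => y; rewrite inE => /Bin; exact: Fc.
have tf0 y : `|p - y| < rho -> phi y = 0 -> tf y = 0.
  move=> hy py; have [ht hz] := Htf y hy.
  apply: (Uniq y) => //; first exact: Hr.
    by rewrite oppr_le0 ltW.
  by rewrite scale0r addr0 py hz.
have Bp : B p by rewrite /B /closed_ball_ /= subrr normr0 ltW.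
exists (F @` B), (ball p (rho / 2)); split; last first.
  split; [exact: ball_open|by rewrite ballE' subrr normr0|].
  move=> z []; rewrite ballE' => hz bz.
  have hz' : `|p - z| < rho by exact: lt_trans hz rho2l.
  have Uz : U0 z.
    by have := Line0 z 0 (Hr z hz') (ltac:(by rewrite oppr_le0 ltW // ltW)); rewrite scale0r addr0.
  have z0 := tf0 z hz' (phi0 z Uz bz).
  exists z; first by rewrite /B /closed_ball_ /= ltW.
  by rewrite /F z0 scale0r addr0.
split.
- move=> _ [y By <-].
  have hy := Bin y By.
  have [ht hz] := Htf y hy.
  have [UF WF _] := inb _ (Line y (tf y) (Hr y hy) ht).
  split => //; split.
    move=> N /(nbhs_ballP _ _) [e e_gt0 He].
    have /andP[til tiu] := Tint y hy.
    set s := Num.min (e / (nv + 1)) (tf y + dl).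
    have s0 : 0 < s.
      rewrite /s lt_min; apply/andP; split; first by rewrite divr_gt0 // ltr_wpDl.
      by rewrite -ltrBlDr sub0r.
    have sle : s <= tf y + dl by rewrite /s ge_min lexx orbT.
    have ht' : -dl <= tf y - s <= dl.
      apply/andP; split; first by rewrite lerBrDl addrC -lerBrDl opprK.
      by rewrite (le_trans _ (ltW tiu)) // gerBl ltW.
    have Uw := Line0 y (tf y - s) (Hr y hy) ht'.
    have pw : phi (y + (tf y - s) *: v) < 0.
      have := Mono y (Hr y hy) (tf y - s) (tf y) (ltac:(by case/andP: ht')) (ltac:(by rewrite gtrBl)) (ltac:(by case/andP: ht)).
      by rewrite hz.
    exists (y + (tf y - s) *: v); split; first by apply/(OmU _ Uw).
    apply: He; rewrite ballE'.
    have -> : F y - (y + (tf y - s) *: v) = s *: v.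
      by rewrite /F scalerBl opprD opprB addrACA subrr add0r addrC subrK.
    rewrite normrZ gtr0_norm //.
    have h1 : e / (nv + 1) * nv < e.
      by rewrite mulrAC ltr_pdivrMr ?ltr_wpDl // ltr_pM2l // ltrDl.
    apply: le_lt_trans h1; apply: ler_wpM2r => //.
    by rewrite /s ge_min lexx.
  move=> /interior_subset OmF.
  by have := (OmU _ UF).1 OmF; rewrite hz ltxx.
- apply: connected_continuous_connected => //; exact: cball_connected.
- apply: compact_closed; first exact: norm_hausdorff.
  by apply: continuous_compact => //; exact: cball_compact.
- exists p => //; rewrite /F tf0 ?scale0r ?addr0 //.
  by rewrite subrr normr0.
Unshelve. all: by end_near.
Qed.
End LOC.
Lemma normB_cont (R : realType) (n : nat) (c : 'rV[R]_n) :
  continuous (fun z : 'rV[R]_n => `|z - c|).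
Proof.
move=> z; apply: continuous_comp; last exact: norm_continuous.
exact: (@continuousB R _ _ (fun y => y) (fun=> c) z (@cvg_id _ _) (@cst_continuous _ _ c z)).
Qed.

Theorem lemma3p12 (R : realType) (n k : nat) (Om : set 'rV[R]_n)
  (hn : (0 < n)%N) (hk : (2 <= k)%N)
  (Om_ne : Om !=set0) (Om_open : open Om) (Om_bdd : bounded_set Om)
  (Om_Ck : Ck_boundary k Om)
  (q : 'rV[R]_n) (hq : ~ boundary Om q)
  (m : nat) (p : 'I_m -> 'rV[R]_n) (p_inj : injective p)
  (hGamma : contact (boundary Om) q = range p) :
  let S := boundary Om in
  exists r : R, dist q S < r /\
  exists Si : 'I_m -> set 'rV[R]_n,
    (forall i, Si i `<=` S) /\
    (forall i, connected (Si i)) /\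
    (forall i, closed (Si i)) /\
    (forall i j, i != j -> Si i `&` Si j = set0) /\
    (forall i, Si i `<=` cball_e q r `&` S) /\
    (forall i, relint S (Si i) (p i)) /\
    exists N : set 'rV[R]_n, nbhs q N /\
      forall x, N x ->
        (forall i, dist x S <= dist x (Si i)) /\
        exists i, dist x S = dist x (Si i).
Proof.
move=> S.
have cS : compact S := boundary_compact _ _ _ Om_bdd.
have S0 : S !=set0 := boundary_nonempty _ _ _ hn Om_ne Om_open Om_bdd.
set d := dist q S.
have pd i : S (p i) /\ enorm (q - p i) = d.
  have : contact S q (p i) by rewrite hGamma; exists i.
  by case.
have [i0 _] : exists i0 : 'I_m, True.
  have [y0 [Sy0 Hy0]] := dist_min _ _ q _ cS S0.
  have : contact S q y0 by split => //; rewrite (dist_eq _ _ _ _ _ Sy0 Hy0).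
  by rewrite hGamma => -[i _ _]; exists i.
pose W i := [set z | (forall j, j != i -> `|z - p i| < `|z - p j|) /\ enorm (z - q) < d + 1].
have NW i : nbhs (p i) (W i).
  apply: filterI.
    have : \forall z \near p i, forall j, j != i -> `|z - p i| < `|z - p j|.
      apply: (@filter_forall 'rV[R]_n 'I_m (fun j z => j != i -> `|z - p i| < `|z - p j|) (nbhs (p i)) (nbhs_filter (p i))) => j.
      have [->|ji] := eqVneq j i; first by apply: nearW => z.
      have pij : 0 < `|p i - p j| - `|p i - p i|.
        by rewrite subrr normr0 subr0 normr_gt0 subr_eq0; apply/eqP => /p_inj e; rewrite e eqxx in ji.
      have := @pos_near R n (fun z => `|z - p j| - `|z - p i|) (p i)
        (continuousB (normB_cont _ _ _ _) (normB_cont _ _ _ _)) pij.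
      by apply: filterS => z; rewrite subr_gt0 => h _.
    by move=> h; exact: h.
  have dp : 0 < d + 1 - enorm (p i - q) by rewrite enormB (pd i).2 addrC addKr.
  have := @pos_near R n (fun z => d + 1 - enorm (z - q)) (p i)
    (continuousB (@cst_continuous _ _ _ _) (enormBr_continuous _ _ q (p i))) dp.
  by apply: filterS => z; rewrite subr_gt0.
have LP i : exists KU : set 'rV[R]_n * set 'rV[R]_n,
    [/\ KU.1 `<=` S `&` W i, connected KU.1, closed KU.1 & KU.1 (p i)] /\
    [/\ open KU.2, KU.2 (p i) & KU.2 `&` S `<=` KU.1].
  have [K [U H]] := local_piece _ _ _ _ hk Om_Ck (p i) (pd i).1 (W i) (NW i).
  by exists (K, U).
have [KU HKU] := choice LP.
exists (d + 1); split; first by rewrite ltrDl.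
exists (fun i => (KU i).1).
have KW i : (KU i).1 `<=` S `&` W i by case: (HKU i) => -[].
have sub i : (KU i).1 `<=` S by move=> z /(KW i) [].
split; first exact: sub.
split; first by move=> i; case: (HKU i) => -[].
split; first by move=> i; case: (HKU i) => -[].
split.
  move=> i j ij; apply/seteqP; split => // z [zi zj].
  have [_ [Wi1 _]] := KW i z zi.
  have [_ [Wj1 _]] := KW j z zj.
  have h1 := Wi1 j (ltac:(by rewrite eq_sym)).
  have h2 := Wj1 i ij.
  by have := lt_trans h1 h2; rewrite ltxx.
split.
  move=> i z zi; have [Sz [_ Wz]] := KW i z zi.
  by split => //; rewrite /cball_e /= ltW.
split.
  move=> i; case: (HKU i) => -[_ _ _ Kp] [oU Up US].
  by split => //; exists (KU i).2.
pose V := \bigcup_(i in [set: 'I_m]) (KU i).2.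
have oV : open V by apply: bigcup_open => i _; case: (HKU i) => _ [].
have [c [dc Hc]] : exists c, d < c /\ forall y, S y -> ~ V y -> c <= enorm (q - y).
  pose K' := S `&` ~` V.
  have cK' : compact K' by apply: compact_closedI => //; exact: open_closedC.
  have [[y1 K'y1]|K'0] := pselect (K' !=set0); last first.
    exists (d + 1); split; first by rewrite ltrDl.
    by move=> y Sy nVy; exfalso; apply: K'0; exists y.
  have [y2 [[Sy2 nVy2] Hy2]] := dist_min _ _ q _ cK' (ex_intro _ y1 K'y1).
  exists (enorm (q - y2)); split; last by move=> y Sy nVy; apply: Hy2.
  rewrite lt_neqAle dist_le // andbT; apply/eqP => e.
  have : contact S q y2 by split.
  rewrite hGamma => -[i _ pi]; apply: nVy2; exists i => //.
  by rewrite -pi; case: (HKU i) => _ [].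
set eta := (c - d) / 2.
have eta0 : 0 < eta by rewrite divr_gt0 // subr_gt0.
exists [set x | enorm (x - q) < eta]; split.
  have h0 : 0 < eta - enorm (q - q) by rewrite subrr enorm0 subr0.
  have := @pos_near R n (fun z => eta - enorm (z - q)) q
    (continuousB (@cst_continuous _ _ _ _) (enormBr_continuous _ _ q q)) h0.
  by apply: filterS => z; rewrite subr_gt0.
move=> x /= xN.
have le1 i : dist x S <= dist x (KU i).1.
  apply: dist_mono; first exact: sub.
  by exists (p i); case: (HKU i) => -[].
split; first exact: le1.
have [y [Sy Hy]] := dist_min _ _ x _ cS S0.
have dxy := dist_eq _ _ _ _ _ Sy Hy.
have h1 : enorm (x - y) < eta + d.
  apply: (le_lt_trans (Hy _ (pd i0).1)).
  apply: (le_lt_trans (enorm_tri _ _ x q (p i0))).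
  by rewrite (pd i0).2 ltrD2r.
have [i _ Ui] : V y.
  apply: contrapT => nVy.
  have h2 := Hc y Sy nVy.
  have h3 := enorm_tri _ _ q x y.
  rewrite (enormB _ _ q x) in h3.
  have : c < c.
    apply: (le_lt_trans h2); apply: (le_lt_trans h3).
    have -> : c = eta + (eta + d) by rewrite /eta; field.
    by apply: ltr_leD => //; exact: ltW.
  by rewrite ltxx.
have Ky : (KU i).1 y by case: (HKU i) => _ [_ _]; apply; split.
exists i; apply/le_anti; apply/andP; split; first exact: le1.
by rewrite dxy; exact: dist_le.
Qed.
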